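(* Let $\alpha = (1,-1)$ denote the simple positive coroot of $SL_2$. Then there is an algebra map \begin{equation*} \mathsf{Y}_{-\alpha}(\mathfrak{sl}_2) \to \mathrm{Diff}(\mathbb{C}^\times) \end{equation*} uniquely determined by $T(x) \mapsto S(x)$, where \begin{equation*} S(x) = \begin{bmatrix} x - \varepsilon z\partial_z & z^{-1} \\ -z & 0 \end{bmatrix} \in \mathrm{Diff}(\mathbb{C}^\times) \otimes \mathrm{End}(V). \end{equation*}
   Context: Fix a generic parameter $\varepsilon$. Let $V \simeq \mathbb{C}^2$ be the defining representation of $\mathfrak{gl}_2$ and let $R(x) = \frac{x - \varepsilon P_{12}}{x-\varepsilon} \in \mathrm{End}(V_1\otimes V_2)(x)$, where $P_{12}$ is the permutation of tensor factors. For a dominant coweight $\mu=(\mu_1,\mu_2)$ of $GL_2$, the antidominantly shifted Yangian $\mathsf{Y}_{-\mu}(\mathfrak{gl}_2)$ is generated by the coefficients $T^{(r)}_{ij}$ of a matrix $T(x)$ with entries $T_{ij}(x) = \sum_{r\in\mathbb{Z}} T^{(r)}_{ij} x^{-r}$, subject to the RTT relations $R_{12}(x_1-x_2)T_1(x_1)T_2(x_2) = T_2(x_2)T_1(x_1)R_{12}(x_1-x_2)$, and requiring a Gauss decomposition $T(x) = \begin{bmatrix}1&0\\ f(x)&1\end{bmatrix}\begin{bmatrix} g_1(x)&0\\0&g_2(x)\end{bmatrix}\begin{bmatrix}1&e(x)\\0&1\end{bmatrix}$ with $f(x), e(x) = O(x^{-1})$ and $g_i(x) = x^{\mu_i} +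 O(x^{\mu_i-1})$ as $x\to\infty$. The quantum determinant $\mathrm{qdet}\,T(x) = T_{22}(x)T_{11}(x-\varepsilon) - T_{12}(x)T_{21}(x-\varepsilon)$ generates the center, and $\mathsf{Y}_{-\mu}(\mathfrak{sl}_2)$ is the quotient of $\mathsf{Y}_{-\mu}(\mathfrak{gl}_2)$ by $\mathrm{qdet}\,T(x)=1$. $\mathrm{Diff}(\mathbb{C}^\times)$ denotes polynomial differential operators in the coordinate $z$ on $\mathbb{C}^\times$. One checks that $S(x)$ satisfies the same RTT relation with this $R$-matrix, that its Gauss decomposition has $g_1(x) = x + \dots$, $g_2(x) = x^{-1}+\dots$, and that $\mathrm{qdet}\,S(x) = 1$. *)

(* Defs.v *)
From mathcomp Require Import all_boot all_order all_algebra.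
From mathcomp Require Import complex Rstruct.

Set Implicit Arguments.
Unset Strict Implicit.
Unset Printing Implicit Defensive.
Import Order.TTheory GRing.Theory Num.Theory.
Local Open Scope ring_scope.

Definition CC : fieldType := (Rdefinitions.R)[i].

Definition is_alg_hom (A B : algType CC) (phi : A -> B) : Prop :=
  [/\ forall x y : A, phi (x + y) = phi x + phi y,
      forall (c : CC) (x : A), phi (c *: x) = c *: phi x,
      forall x y : A, phi (x * y) = phi x * phi y
    & phi 1 = 1].

Definition i1 : 'I_2 := @Ordinal 2 0 isT.
Definition i2 : 'I_2 := @Ordinal 2 1 isT.

(* A (one-variable) series  f(x) = \sum_{r \in Z} f r x^{-r}  with coefficients
   in A is represented by its coefficient function  f : int -> A
   (f r = coefficient of x^{-r}).  A matrix series T(x) = (T_ij(x)) is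
   t : 'I_2 -> 'I_2 -> int -> A, with t i j r = T^{(r)}_{ij}. *)

(* Product of two series f, g supported in degrees r >= L1 (resp. r >= L2),
   i.e. f(x) \in x^{-L1} A[[x^{-1}]]; the product is supported in r >= L1+L2. *)
Definition sermul (A : algType CC) (L1 L2 : int) (f g : int -> A) (n : int) : A :=
  if (L1 + L2 <= n) then
    \sum_(k < (absz (n - L1 - L2)%R).+1) f (L1 + k%:Z) * g (n - L1 - k%:Z)
  else 0.

Definition gbinom (a : int) (m : nat) : CC :=
  (\prod_(i < m) ((a - i%:Z)%:~R : CC)) / (m`!)%:R.

(* Coefficient of x^{-n} in (x - c)^{-r}, with m = n - r >= 0:
   (x - c)^{-r} = \sum_{m >= 0} binom(-r, m) (-c)^m x^{-r-m}. *)
Definition shift_coef (c : CC) (r : int) (m : nat) : CC :=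
  gbinom (- r) m * (- c) ^+ m.

(* The series f(x - c), for f supported in degrees r >= L. *)
Definition sershift (A : algType CC) (c : CC) (L : int) (f : int -> A) (n : int) : A :=
  if (L <= n) then
    \sum_(k < (absz (n - L)%R).+1) shift_coef c (L + k%:Z) (absz (n - L)%R - k)%N *: f (L + k%:Z)
  else 0.

(* Formal series in two variables x1, x2 are represented by
   coefficient functions int -> int -> A: (a, b) |-> coefficient of
   x1^{-a} x2^{-b}.  Matrices in End(V_1 (x) V_2), V = C^2, are indexed by
   pairs ('I_2 * 'I_2), (i,k) <-> e_i (x) e_k.
   T_1(x1) = T(x1) (x) 1,  T_2(x2) = 1 (x) T(x2),  P_{12} the flip. *)

Definition Pmx (A : algType CC) (ik pq : 'I_2 * 'I_2) : A :=
  if (ik.1 == pq.2) && (ik.2 == pq.1) then 1 else 0.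

Definition T1T2 (A : algType CC) (t : 'I_2 -> 'I_2 -> int -> A)
    (pq jl : 'I_2 * 'I_2) (a b : int) : A :=
  \sum_(mn : 'I_2 * 'I_2)
     ((if pq.2 == mn.2 then t pq.1 mn.1 a else 0) *
      (if mn.1 == jl.1 then t mn.2 jl.2 b else 0)).

Definition T2T1 (A : algType CC) (t : 'I_2 -> 'I_2 -> int -> A)
    (pq jl : 'I_2 * 'I_2) (a b : int) : A :=
  \sum_(mn : 'I_2 * 'I_2)
     ((if pq.1 == mn.1 then t pq.2 mn.2 b else 0) *
      (if mn.2 == jl.2 then t mn.1 jl.1 a else 0)).

(* left multiplication by the numerator (x1 - x2) - eps P_{12} of R_{12}(x1 - x2) *)
Definition Rnum_left (A : algType CC) (eps : CC)
    (M : 'I_2 * 'I_2 -> 'I_2 * 'I_2 -> int -> int -> A)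
    (ik jl : 'I_2 * 'I_2) (a b : int) : A :=
  M ik jl (a + 1) b - M ik jl a (b + 1)
  - eps *: \sum_(pq : 'I_2 * 'I_2) Pmx A ik pq * M pq jl a b.

(* right multiplication by (x1 - x2) - eps P_{12} *)
Definition Rnum_right (A : algType CC) (eps : CC)
    (M : 'I_2 * 'I_2 -> 'I_2 * 'I_2 -> int -> int -> A)
    (ik jl : 'I_2 * 'I_2) (a b : int) : A :=
  M ik jl (a + 1) b - M ik jl a (b + 1)
  - eps *: \sum_(pq : 'I_2 * 'I_2) M ik pq a b * Pmx A pq jl.

(* R_{12}(x1-x2) T_1(x1) T_2(x2) = T_2(x2) T_1(x1) R_{12}(x1-x2), with
   R(x) = (x - eps P)/(x - eps); the scalar denominator x1 - x2 - eps is
   cleared on both sides. *)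
Definition RTT (A : algType CC) (eps : CC) (t : 'I_2 -> 'I_2 -> int -> A) : Prop :=
  forall (ik jl : 'I_2 * 'I_2) (a b : int),
    Rnum_left eps (T1T2 t) ik jl a b = Rnum_right eps (T2T1 t) ik jl a b.

(* Gauss decomposition of shape mu = (mu1, mu2):
   T(x) = [1 0; f 1] [g1 0; 0 g2] [1 e; 0 1], with e, f = O(x^{-1}) and
   g_i(x) = x^{mu_i} + O(x^{mu_i - 1}). Entrywise:
   T11 = g1, T12 = g1 e, T21 = f g1, T22 = f g1 e + g2. *)
Definition gauss_decomp (A : algType CC) (mu : int * int)
    (t : 'I_2 -> 'I_2 -> int -> A) : Prop :=
  exists (e f g1 g2 : int -> A),
    [/\ forall r, (r <= 0) -> e r = 0,
        forall r, (r <= 0) -> f r = 0,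
        (forall r, (r < - mu.1) -> g1 r = 0) /\ g1 (- mu.1) = 1,
        (forall r, (r < - mu.2) -> g2 r = 0) /\ g2 (- mu.2) = 1 &
        forall r,
        [/\ t i1 i1 r = g1 r,
            t i1 i2 r = sermul (- mu.1) 1 g1 e r,
            t i2 i1 r = sermul 1 (- mu.1) f g1 r &
            t i2 i2 r = sermul (1 - mu.1) 1 (sermul 1 (- mu.1) f g1) e r + g2 r]].

(* quantum determinant qdet T(x) = T22(x) T11(x - eps) - T12(x) T21(x - eps),
   for T with all entries supported in degrees r >= - mu1 (which holds for
   T with a Gauss decomposition of shape mu, mu dominant). *)
Definition qdet (A : algType CC) (eps : CC) (mu : int * int)
    (t : 'I_2 -> 'I_2 -> int -> A) (n : int) : A :=
  sermul (- mu.1) (- mu.1) (t i2 i2) (sershift eps (- mu.1) (t i1 i1)) n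
  - sermul (- mu.1) (- mu.1) (t i1 i2) (sershift eps (- mu.1) (t i2 i1)) n.

Definition yangian_sl2_rel (A : algType CC) (eps : CC) (mu : int * int)
    (t : 'I_2 -> 'I_2 -> int -> A) : Prop :=
  [/\ RTT eps t, gauss_decomp mu t & forall n, qdet eps mu t n = (n == 0)%:R].

(* (Y, T) is the antidominantly shifted Yangian Y_{-mu}(sl_2): the C-algebra
   generated by the T^{(r)}_{ij} subject to the relations above, expressed by
   its universal property. *)
Definition is_shifted_yangian_sl2 (eps : CC) (mu : int * int)
    (Y : algType CC) (T : 'I_2 -> 'I_2 -> int -> Y) : Prop :=
  yangian_sl2_rel eps mu T /\
  forall (A : algType CC) (t : 'I_2 -> 'I_2 -> int -> A),
    yangian_sl2_rel eps mu t ->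
    exists phi : Y -> A,
      [/\ is_alg_hom phi, (forall i j r, phi (T i j r) = t i j r) &
          forall psi : Y -> A, is_alg_hom psi ->
            (forall i j r, psi (T i j r) = t i j r) -> psi =1 phi].

(* (D, z, zi, d) is Diff(C^x) = C[z, z^{-1}]<d_z>, the algebra of polynomial
   differential operators on C^x, via its standard presentation:
   generators z, z^{-1}, d_z with z z^{-1} = z^{-1} z = 1, d_z z - z d_z = 1. *)
Definition diff_rel (A : algType CC) (z zi d : A) : Prop :=
  [/\ z * zi = 1, zi * z = 1 & d * z - z * d = 1].

Definition is_Diff_Cx (D : algType CC) (z zi d : D) : Prop :=
  diff_rel z zi d /\
  forall (A : algType CC) (z' zi' d' : A),
    diff_rel z' zi' d' ->
    exists phi : D -> A,
      [/\ is_alg_hom phi, [/\ phi z = z', phi zi = zi' & phi d = d'] &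
          forall psi : D -> A, is_alg_hom psi ->
            [/\ psi z = z', psi zi = zi' & psi d = d'] -> psi =1 phi].

Definition alpha : int * int := (1 : int, - 1 : int).

(* Coefficients of S(x) = [x - eps z d_z, z^{-1}; -z, 0]:
   S_ij(x) = \sum_r S^{(r)}_ij x^{-r}. *)
Definition S_coef (D : algType CC) (eps : CC) (z zi d : D)
    (i j : 'I_2) (r : int) : D :=
  if (i == i1) && (j == i1) then
    (if r == - 1 then 1 else if r == 0 then - (eps *: (z * d)) else 0)
  else if (i == i1) && (j == i2) then (if r == 0 then zi else 0)
  else if (i == i2) && (j == i1) then (if r == 0 then - z else 0)
  else 0.

(* Main.v *)
Require Import Defs.
From mathcomp Require Import all_boot all_algebra.
From mathcomp Require Import complex Rstruct zify.
Import GRing.Theory.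
Local Open Scope ring_scope.

Lemma sum_pair2 (A : algType CC) (F : 'I_2 * 'I_2 -> A) :
  \sum_(mn : 'I_2 * 'I_2) F mn = F (i1,i1) + F(i1,i2) + F(i2,i1) + F(i2,i2).
Proof.
rewrite (eq_bigr (fun p => F (p.1, p.2))); last by case.
rewrite -(pair_bigA _ (fun i j => F (i, j))) /= !big_ord_recl !big_ord0 /= !addr0 !addrA.
have -> : (lift ord0 ord0 : 'I_2) = i2 by apply/val_inj.
by have -> : (ord0 : 'I_2) = i1 by apply/val_inj.
Qed.

Lemma ord2P (i : 'I_2) : i = i1 \/ i = i2.
Proof. case: i => [[|[|n]] Hn]; [left; exact: val_inj|right; exact: val_inj|done]. Qed.

Section S.
Variables (eps : CC) (D : algType CC) (z zi d : D).
Hypothesis Drel : diff_rel z zi d.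
Local Notation S := (S_coef eps z zi d).

Lemma S_other i j r : r != -1 -> r != 0 -> S i j r = 0.
Proof. by move=> /negbTE h1 /negbTE h0; rewrite /S_coef h1 h0; by repeat case: ifP. Qed.


Lemma e_m1 (a : int) : (a + 1 == -1) = (a == -2).
Proof. by apply/eqP/eqP; lia. Qed.
Lemma e_0 (a : int) : (a + 1 == 0) = (a == -1).
Proof. by apply/eqP/eqP; lia. Qed.

Ltac simp0 := rewrite ?(mul0r, mulr0, add0r, addr0, mul1r, mulr1, scaler0, subr0, sub0r, opprK, oppr0).




Definition vals (a : int) (x11 y11 x12 y12 x21 y21 : D) :=
  S i1 i1 a = x11 /\ S i1 i1 (a + 1) = y11 /\ S i1 i2 a = x12 /\ S i1 i2 (a + 1) = y12 /\ S i2 i1 a = x21 /\ S i2 i1 (a + 1) = y21.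

Lemma int4S (a : int) :
  vals a 0 1 0 0 0 0 \/ vals a 1 (- (eps *: (z * d))) 0 zi 0 (- z) \/
  vals a (- (eps *: (z * d))) 0 zi 0 (- z) 0 \/ vals a 0 0 0 0 0 0.
Proof.
have [->|h1] := eqVneq a (-2); first by left; rewrite /vals; repeat split.
have [->|h2] := eqVneq a (-1); first by right; left; rewrite /vals; repeat split.
have [->|h3] := eqVneq a 0; first by right; right; left; rewrite /vals; repeat split.
right; right; right; (repeat split); apply: S_other => //; by rewrite ?e_m1 ?e_0.
Qed.

Lemma RTT_of (t : 'I_2 -> 'I_2 -> int -> D) (h22 : forall r, t i2 i2 r = 0)
  (H1 : forall a b, t i1 i1 (a + 1) * t i1 i1 b - t i1 i1 a * t i1 i1 (b + 1) - eps *: (t i1 i1 a * t i1 i1 b) = t i1 i1 b * t i1 i1 (a + 1) - t i1 i1 (b + 1) * t i1 i1 a - eps *: (t i1 i1 b * t i1 i1 a))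
  (H2 : forall a b, t i1 i1 (a + 1) * t i1 i2 b - t i1 i1 a * t i1 i2 (b + 1) - eps *: (t i1 i1 a * t i1 i2 b) = t i1 i2 b * t i1 i1 (a + 1) - t i1 i2 (b + 1) * t i1 i1 a - eps *: (t i1 i1 b * t i1 i2 a))
  (H3 : forall a b, t i1 i1 (a + 1) * t i2 i1 b - t i1 i1 a * t i2 i1 (b + 1) - eps *: (t i2 i1 a * t i1 i1 b) = t i2 i1 b * t i1 i1 (a + 1) - t i2 i1 (b + 1) * t i1 i1 a - eps *: (t i2 i1 b * t i1 i1 a))
  (H4 : forall a b, - (eps *: (t i2 i1 a * t i1 i2 b)) = - (eps *: (t i2 i1 b * t i1 i2 a)))
  (H5 : forall a b, t i1 i2 (a + 1) * t i1 i1 b - t i1 i2 a * t i1 i1 (b + 1) - eps *: (t i1 i2 a * t i1 i1 b) = t i1 i1 b * t i1 i2 (a + 1) - t i1 i1 (b + 1) * t i1 i2 a - eps *: (t i1 i2 b * t i1 i1 a))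
  (H6 : forall a b, t i1 i2 (a + 1) * t i1 i2 b - t i1 i2 a * t i1 i2 (b + 1) - eps *: (t i1 i2 a * t i1 i2 b) = t i1 i2 b * t i1 i2 (a + 1) - t i1 i2 (b + 1) * t i1 i2 a - eps *: (t i1 i2 b * t i1 i2 a))
  (H7 : forall a b, t i1 i2 (a + 1) * t i2 i1 b - t i1 i2 a * t i2 i1 (b + 1) = t i2 i1 b * t i1 i2 (a + 1) - t i2 i1 (b + 1) * t i1 i2 a)
  (H8 : forall a b, t i2 i1 (a + 1) * t i1 i1 b - t i2 i1 a * t i1 i1 (b + 1) - eps *: (t i1 i1 a * t i2 i1 b) = t i1 i1 b * t i2 i1 (a + 1) - t i1 i1 (b + 1) * t i2 i1 a - eps *: (t i1 i1 b * t i2 i1 a))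
  (H9 : forall a b, t i2 i1 (a + 1) * t i1 i2 b - t i2 i1 a * t i1 i2 (b + 1) = t i1 i2 b * t i2 i1 (a + 1) - t i1 i2 (b + 1) * t i2 i1 a)
  (H10 : forall a b, t i2 i1 (a + 1) * t i2 i1 b - t i2 i1 a * t i2 i1 (b + 1) - eps *: (t i2 i1 a * t i2 i1 b) = t i2 i1 b * t i2 i1 (a + 1) - t i2 i1 (b + 1) * t i2 i1 a - eps *: (t i2 i1 b * t i2 i1 a))
  (H11 : forall a b, - (eps *: (t i1 i2 a * t i2 i1 b)) = - (eps *: (t i1 i2 b * t i2 i1 a))) : RTT eps t.
Proof.
move=> [i k] [j l] a b.
rewrite /Rnum_left /Rnum_right /T1T2 /T2T1 !sum_pair2 /Pmx /=.
case: (ord2P i) => ->; case: (ord2P j) => ->; case: (ord2P k) => ->; case: (ord2P l) => -> /=; rewrite ?h22; simp0.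
all: first [done | apply: H1 | apply: H2 | apply: H3 | apply: H4 | apply: H5 | apply: H6 | apply: H7 | apply: H8 | apply: H9 | apply: H10 | apply: H11].
Qed.

Lemma dz : d * z = z * d + 1.
Proof. by case: Drel => _ _ /eqP; rewrite subr_eq addrC => /eqP. Qed.
Lemma F1u : z * d * zi = zi * (z * d) - zi.
Proof.
case: Drel => hz hzi _.
have e : d = z * d * zi + zi by rewrite -{1}(mulr1 d) -hz mulrA dz mulrDl mul1r.
by rewrite mulrA hzi mul1r {2}e addrK.
Qed.
Lemma F2u : z * d * z = z * (z * d) + z.
Proof. by rewrite -mulrA dz mulrDr mulr1. Qed.
Lemma F3 : z * zi = zi * z.
Proof. by case: Drel => -> ->. Qed.
Lemma F1 : (eps *: (z * d)) * zi = zi * (eps *: (z * d)) - eps *: zi.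
Proof. by rewrite -scalerAl -scalerAr F1u scalerBr. Qed.
Lemma F2 : (eps *: (z * d)) * z = z * (eps *: (z * d)) + eps *: z.
Proof. by rewrite -scalerAl -scalerAr F2u scalerDr. Qed.
Ltac crunch a b :=
  case: (int4S a) => [[? [? [? [? [? ?]]]]]|[[? [? [? [? [? ?]]]]]|[[? [? [? [? [? ?]]]]]|[? [? [? [? [? ?]]]]]]]];
  case: (int4S b) => [[? [? [? [? [? ?]]]]]|[[? [? [? [? [? ?]]]]]|[[? [? [? [? [? ?]]]]]|[? [? [? [? [? ?]]]]]]]];
  repeat match goal with H : S _ _ _ = _ |- _ => rewrite ?H; clear H end; simp0; try done;
  rewrite ?(mulrN, mulNr, opprK, F1, F2, F3, scalerN, opprB, opprD, addrA) ?subrK; try done; by rewrite addrAC subrr add0r.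

Lemma RS1 a b : S i1 i1 (a + 1) * S i1 i1 b - S i1 i1 a * S i1 i1 (b + 1) - eps *: (S i1 i1 a * S i1 i1 b) = S i1 i1 b * S i1 i1 (a + 1) - S i1 i1 (b + 1) * S i1 i1 a - eps *: (S i1 i1 b * S i1 i1 a).
Proof. crunch a b. Qed.

Lemma RS2 a b : S i1 i1 (a + 1) * S i1 i2 b - S i1 i1 a * S i1 i2 (b + 1) - eps *: (S i1 i1 a * S i1 i2 b) = S i1 i2 b * S i1 i1 (a + 1) - S i1 i2 (b + 1) * S i1 i1 a - eps *: (S i1 i1 b * S i1 i2 a).
Proof. crunch a b. Qed.

Lemma RS3 a b : S i1 i1 (a + 1) * S i2 i1 b - S i1 i1 a * S i2 i1 (b + 1) - eps *: (S i2 i1 a * S i1 i1 b) = S i2 i1 b * S i1 i1 (a + 1) - S i2 i1 (b + 1) * S i1 i1 a - eps *: (S i2 i1 b * S i1 i1 a).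
Proof. crunch a b. Qed.

Lemma RS4 a b : - (eps *: (S i2 i1 a * S i1 i2 b)) = - (eps *: (S i2 i1 b * S i1 i2 a)).
Proof. crunch a b. Qed.

Lemma RS5 a b : S i1 i2 (a + 1) * S i1 i1 b - S i1 i2 a * S i1 i1 (b + 1) - eps *: (S i1 i2 a * S i1 i1 b) = S i1 i1 b * S i1 i2 (a + 1) - S i1 i1 (b + 1) * S i1 i2 a - eps *: (S i1 i2 b * S i1 i1 a).
Proof. crunch a b. Qed.

Lemma RS6 a b : S i1 i2 (a + 1) * S i1 i2 b - S i1 i2 a * S i1 i2 (b + 1) - eps *: (S i1 i2 a * S i1 i2 b) = S i1 i2 b * S i1 i2 (a + 1) - S i1 i2 (b + 1) * S i1 i2 a - eps *: (S i1 i2 b * S i1 i2 a).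
Proof. crunch a b. Qed.

Lemma RS7 a b : S i1 i2 (a + 1) * S i2 i1 b - S i1 i2 a * S i2 i1 (b + 1) = S i2 i1 b * S i1 i2 (a + 1) - S i2 i1 (b + 1) * S i1 i2 a.
Proof. crunch a b. Qed.

Lemma RS8 a b : S i2 i1 (a + 1) * S i1 i1 b - S i2 i1 a * S i1 i1 (b + 1) - eps *: (S i1 i1 a * S i2 i1 b) = S i1 i1 b * S i2 i1 (a + 1) - S i1 i1 (b + 1) * S i2 i1 a - eps *: (S i1 i1 b * S i2 i1 a).
Proof. crunch a b. Qed.

Lemma RS9 a b : S i2 i1 (a + 1) * S i1 i2 b - S i2 i1 a * S i1 i2 (b + 1) = S i1 i2 b * S i2 i1 (a + 1) - S i1 i2 (b + 1) * S i2 i1 a.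
Proof. crunch a b. Qed.

Lemma RS10 a b : S i2 i1 (a + 1) * S i2 i1 b - S i2 i1 a * S i2 i1 (b + 1) - eps *: (S i2 i1 a * S i2 i1 b) = S i2 i1 b * S i2 i1 (a + 1) - S i2 i1 (b + 1) * S i2 i1 a - eps *: (S i2 i1 b * S i2 i1 a).
Proof. crunch a b. Qed.

Lemma RS11 a b : - (eps *: (S i1 i2 a * S i2 i1 b)) = - (eps *: (S i1 i2 b * S i2 i1 a)).
Proof. crunch a b. Qed.


Let X := eps *: (z * d).
Lemma s11m1 : S i1 i1 (-1) = 1. Proof. by []. Qed.
Lemma s110 : S i1 i1 0 = - X. Proof. by []. Qed.
Lemma s120 : S i1 i2 0 = zi. Proof. by []. Qed.
Lemma s210 : S i2 i1 0 = - z. Proof. by []. Qed.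
Arguments S_coef : simpl never.
Definition Ee (r : int) : D := match r with Posz m.+1 => X ^+ m * zi | _ => 0 end.
Definition Ff (r : int) : D := match r with Posz m.+1 => - (z * X ^+ m) | _ => 0 end.
Definition G2 (r : int) : D := match r with Posz m.+1 => z * X ^+ m * zi | _ => 0 end.

Lemma s11_shift (k : nat) : S i1 i1 (-1 + k.+2%:Z) = 0.
Proof. by apply: S_other; apply/eqP; lia. Qed.

Lemma sum_g1 (h : nat -> D) n :
  \sum_(k < n.+2) S i1 i1 (-1 + k%:Z) * h k = h 0%N - X * h 1%N.
Proof.
rewrite !big_ord_recl big1 ?addr0 => [|k _]; last by rewrite /= /bump /= s11_shift mul0r.
by rewrite /= /bump /= s11m1 s110 mul1r mulNr.
Qed.


Lemma int_sub1 n (k : 'I_n.+1) : (n%:Z - -1 - k%:Z) = Posz (n - k).+1.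
Proof. have := ltn_ord k; lia. Qed.

Lemma S12_other r : r != 0 -> S i1 i2 r = 0.
Proof. by move=> /negbTE h; rewrite /S_coef /= h. Qed.
Lemma S21_other r : r != 0 -> S i2 i1 r = 0.
Proof. by move=> /negbTE h; rewrite /S_coef /= h. Qed.

Lemma t12_ok r : S i1 i2 r = sermul (-1) 1 (S i1 i1) Ee r.
Proof.
rewrite /sermul; case: r => n; last first.
  rewrite (_ : (-1 + 1 <= Negz n) = false); last by lia.
  by apply: S12_other; apply/eqP; lia.
rewrite (_ : (-1 + 1 <= n%:Z) = true); last by lia.
set m := absz _; have -> : m = n by rewrite /m; lia.
clear m.
rewrite (eq_bigr (fun k : 'I_n.+1 => S i1 i1 (-1 + (k : nat)%:Z) * (X ^+ (n - k) * zi))); last first.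
  by move=> k _; rewrite int_sub1.
case: n => [|m]; first by rewrite big_ord1 /= s11m1 mul1r expr0 mul1r s120.
rewrite (sum_g1 (fun k : nat => X ^+ (m.+1 - k) * zi)) /= subn0 subSS subn0 exprS mulrA subrr.
by apply: S12_other; apply/eqP; lia.
Qed.

Lemma sum_single N (F : 'I_N -> D) (k0 : 'I_N) :
  (forall k, k != k0 -> F k = 0) -> \sum_k F k = F k0.
Proof. by move=> h; rewrite (bigD1 k0) //= big1 ?addr0 // => k /h. Qed.

Lemma S11_val (r : int) : S i1 i1 r = if r == -1 then 1 else if r == 0 then - X else 0.
Proof. by []. Qed.

Lemma t21_ok r : S i2 i1 r = sermul 1 (-1) Ff (S i1 i1) r.
Proof.
rewrite /sermul; case: r => n; last first.
  rewrite (_ : (1 + -1 <= Negz n) = false); last by lia.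
  by apply: S21_other; apply/eqP; lia.
rewrite (_ : (1 + -1 <= n%:Z) = true); last by lia.
set m := absz _; have -> : m = n by rewrite /m; lia.
clear m.
case: n => [|n].
  by rewrite big_ord1 /= S11_val /= mulr1 expr0 mulr1 s210.
rewrite !big_ord_recr /= big1 ?add0r => [|k _]; last first.
  have := ltn_ord k; rewrite S11_val /=.
  case: eqP => h1; first by lia.
  case: eqP => h2; first by lia.
  by rewrite mulr0.
rewrite !S11_val /= add0n.
case: eqP => [h|_]; first by lia.
case: eqP => [_|h]; last by lia.
case: eqP => [_|h]; last by lia.
by rewrite mulr1 mulrN mulNr opprK -mulrA -exprSr add0n subrr S21_other.
Qed.

Lemma eq_sermul L1 L2 (f f' g g' : int -> D) : f =1 f' -> g =1 g' ->
  sermul L1 L2 f g =1 sermul L1 L2 f' g'.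
Proof. by move=> hf hg n; rewrite /sermul; case: ifP => // _; apply: eq_bigr => k _; rewrite hf hg. Qed.

Lemma s22 r : S i2 i2 r = 0. Proof. by rewrite /S_coef. Qed.

Lemma t22_ok r : S i2 i2 r = sermul (1 - 1) 1 (sermul 1 (-1) Ff (S i1 i1)) Ee r + G2 r.
Proof.
rewrite (@eq_sermul _ _ _ (S i2 i1) Ee Ee (fun r => esym (t21_ok r)) (frefl _)) s22.
rewrite /sermul; case: r => [[|n]|n] /=.
- by rewrite addr0.
- rewrite (_ : (n.+1 + 0 - 1 = n)%N); last by lia.
  rewrite (@sum_single _ _ ord0) => [|k hk].
    by rewrite /= addr0 s210 !addn0 mulNr mulrA addNr.
  rewrite S21_other ?mul0r //; apply/eqP => h; move: hk; rewrite -val_eqE /=; apply/negP/negPn/eqP; lia.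
- by rewrite addr0.
Qed.

Lemma gauss_S : gauss_decomp alpha S.
Proof.
exists Ee, Ff, (S i1 i1), G2; split.
- by case => [[|n]|n] //= h; lia.
- by case => [[|n]|n] //= h; lia.
- split => // r h; apply: S_other; apply/eqP; move: h; rewrite /alpha /=; lia.
- split; last by rewrite /= expr0 mulr1; case: Drel.
  by case => [[|n]|n] //= h; lia.
- move=> r; split => //.
  + exact: t12_ok.
  + exact: t21_ok.
  + exact: t22_ok.
Qed.

Lemma gbinom0 m : gbinom 0 m = (m == 0%N)%:R.
Proof.
rewrite /gbinom; case: m => [|m].
  by rewrite big_ord0 /= invr1 mulr1.
by rewrite big_ord_recl /= subr0 mul0r mul0r.
Qed.

Lemma shift21 : sershift eps (-1) (S i2 i1) =1 S i2 i1.
Proof.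
case=> [n|n]; rewrite /sershift /=.
  rewrite addn1 !big_ord_recl big1 ?addr0 => [|k _]; last first.
    by rewrite S21_other ?scaler0 //; apply/eqP; rewrite /= /bump /=; lia.
  rewrite /= /bump /= (@S21_other (-1)) // scaler0 add0r s210 /shift_coef /= subn1 /= gbinom0.
  case: n => [|n] /=; first by rewrite mul1r scale1r s210.
  by rewrite mul0r scale0r S21_other.
case: n => [|n].
  rewrite mathcomp.order.preorder.Order.PreorderTheory.lexx.
  by rewrite big_ord1 /= !S21_other ?scaler0.
have /negbTE -> : ~~ (-1 <= Negz n.+1) by lia.
by rewrite S21_other.
Qed.

Lemma qdet_S n : qdet eps alpha S n = (n == 0)%:R.
Proof.
rewrite /qdet /alpha /=.
rewrite {1}/sermul big1 ?if_same ?sub0r => [|k _]; last by rewrite s22 mul0r.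
rewrite (@eq_sermul _ _ _ (S i1 i2) _ (S i2 i1) (frefl _) shift21) /sermul.
case: n => [n|n] /=; last first.
  rewrite big1 ?if_same ?oppr0 // => k _.
  have [hk|hk] := eqVneq (k : nat) 1%N.
    by rewrite (@S21_other (Negz n - -1 - k%:Z)) ?mulr0 //; apply/eqP; lia.
  by rewrite S12_other ?mul0r //; apply/eqP; move/eqP: hk; lia.
rewrite !addn1 !big_ord_recl big1 ?addr0 => [|k _]; last first.
  by rewrite S12_other ?mul0r //; apply/eqP; rewrite /= /bump /=; lia.
rewrite /= /bump /= (@S12_other (-1)) // mul0r add0r s120.
rewrite (@S12_other (-1 + ((1 + (1 + 0))%N : nat)%:Z)) ?mul0r ?addr0; last by apply/eqP; lia.
rewrite [S i2 i1 _]/S_coef /=.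
case: eqP => [h|h].
  have -> : n = 0%N by lia.
  by rewrite mulrN opprK; case: Drel.
have /negbTE -> : (Posz n != 0) by apply/eqP; lia.
by rewrite mulr0 oppr0.
Qed.

Lemma S_rel : yangian_sl2_rel eps alpha S.
Proof.
split; [| exact: gauss_S | exact: qdet_S].
apply: RTT_of; [exact: s22 | exact: RS1 | exact: RS2 | exact: RS3 | exact: RS4 | exact: RS5
  | exact: RS6 | exact: RS7 | exact: RS8 | exact: RS9 | exact: RS10 | exact: RS11].
Qed.

End S.

Theorem proposition4p5 (eps : CC)
    (Y : algType CC) (T : 'I_2 -> 'I_2 -> int -> Y)
    (D : algType CC) (z zi d : D) :
  is_shifted_yangian_sl2 eps alpha T ->
  is_Diff_Cx z zi d ->
  exists phi : Y -> D,
    [/\ is_alg_hom phi,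
        (forall i j r, phi (T i j r) = S_coef eps z zi d i j r) &
        forall psi : Y -> D, is_alg_hom psi ->
          (forall i j r, psi (T i j r) = S_coef eps z zi d i j r) ->
          psi =1 phi].
Proof.
move=> [_ Yuniv] [Drel _].
exact: (Yuniv D _ (@S_rel eps D z zi d Drel)).
Qed.
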